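(* There exist an environment $E$ and a total preorder $\succeq$ on $\Pi^E$ such that $\succeq\in\mathrm{Ord}_{\mathrm{RRL}}(E)$ but $\succeq\notin\mathrm{Ord}_{\mathrm{FTR}}(E)$. (Such an ordering can be obtained from an RRL specification with $\alpha>0$ and $F$ the Shannon entropy $F(p)=-\sum_a p(a)\log p(a)$.)
   Context: An environment is a tuple $E=(\mathcal S,\mathcal A,\mathcal T,\mathcal I)$ where $\mathcal S,\mathcal A$ are finite nonempty sets, $\mathcal T:\mathcal S\times\mathcal A\to\Delta(\mathcal S)$ and $\mathcal I\in\Delta(\mathcal S)$. A policy is a map $\pi:\mathcal S\to\Delta(\mathcal A)$ (stationary, possibly stochastic); $\Pi^E$ denotes the set of all policies. A trajectory $\xi=(s_0,a_0,s_1,a_1,\dots)\in\Xi:=\mathcal S\times(\mathcal A\times\mathcal S)^\omega$ is generated under $\pi$ by $s_0\sim\mathcal I$, $a_t\sim\pi(s_t)$, $s_{t+1}\sim\mathcal T(s_t,a_t)$; $\mathbb E^\pi_\xi$ denotes expectation under this distribution. An objective-specification formalism $X$ assigns to each environment $E$ a set of objective specifications, each inducing a total preorder $\succeq$ on $\Pi^E$; $\mathrm{Ord}_X(E)$ is the set of total preorders so induced. A specification defining a scalar $J:\Pi^E\to\mathbb R$ induces $\pi_1\succeq\pi_2\iff J(\pi_1)\ge J(\pi_2)$. RRL: specification $(\mathcal R,\alpha,F,\gamma)$ with $\mathcal R:\mathcal S\times\mathcal A\times\mathcal S\to\mathbb R$, $\alpha\in\mathbb R$, $F:\Delta(\mathcal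 A)\to\mathbb R$, $\gamma\in[0,1)$; $J(\pi)=\mathbb E^\pi_\xi[\sum_{t=0}^\infty\gamma^t(\mathcal R(s_t,a_t,s_{t+1})-\alpha F(\pi(s_t)))]$. FTR: specification $(f)$ with $f:\Xi\to\mathbb R$ Borel measurable (product topology on $\Xi$) such that $\mathbb E^\pi_\xi[f(\xi)]$ is well-defined and finite for every policy; $J(\pi)=\mathbb E^\pi_\xi[f(\xi)]$. *)

(* Defs.v *)
From HB Require Import structures.
From mathcomp Require Import all_boot all_order all_algebra.
From mathcomp Require Import all_classical all_reals all_analysis.

Set Implicit Arguments.
Unset Strict Implicit.
Unset Printing Implicit Defensive.

Import Order.TTheory GRing.Theory Num.Theory.
Local Open Scope classical_set_scope.
Local Open Scope ring_scope.

(* 'I_n.+1 is pointed (needed for the generated sigma-algebra type). *)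
HB.instance Definition _ (n : nat) := isPointed.Build 'I_n.+1 ord0.

(* Finite nonempty state set S = 'I_m.+1 and action set A = 'I_k.+1
   (every finite nonempty set is in bijection with such an ordinal). *)
Notation St m := 'I_m.+1.

Record dist (R : realType) (X : finType) := Dist {
  dprob :> X -> R;
  dprob_ge0 : forall x, 0 <= dprob x;
  dprob_sum1 : \sum_(x : X) dprob x = 1 }.

Record env (R : realType) (m k : nat) := Env {
  trans : St m -> St k -> dist R (St m);
  init : dist R (St m) }.

Definition policy (R : realType) (m k : nat) := St m -> dist R (St k).

Section Trajectories.
Variable R : realType.
Variables m k : nat.

(* Xi = S x (A x S)^omega : xi = (s_0, t |-> (a_t, s_{t+1})). *)
Definition Xi := (St m * (nat -> St k * St m))%type.

Definition st (xi : Xi) (t : nat) : St m :=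
  if t is t'.+1 then (xi.2 t').2 else xi.1.
Definition act (xi : Xi) (t : nat) : St k := (xi.2 t).1.

(* Product topology on Xi (discrete factors): basic open sets fix s_0 and
   finitely many coordinates (a_t, s_{t+1}). *)
Definition agree (n : nat) (x y : Xi) : Prop :=
  x.1 = y.1 /\ forall t, (t < n)%N -> x.2 t = y.2 t.
Definition xi_open (U : set Xi) : Prop :=
  forall x, U x -> exists n, [set y | agree n x y] `<=` U.

Local Notation XiM := (g_sigma_algebraType xi_open).

Definition cyl (n : nat) (s : nat -> St m) (a : nat -> St k) : set XiM :=
  [set xi | forall t, (t <= n)%N -> st xi t = s t /\ ((t < n)%N -> act xi t = a t)].

Definition cyl_prob (E : env R m k) (pi : policy R m k) (n : nat)
  (s : nat -> St m) (a : nat -> St k) : R :=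
  init E (s 0%N) *
  \prod_(t < n) (pi (s t) (a t) * trans E (s t) (a t) (s t.+1)).

(* P is the distribution of trajectories generated by pi in E:
   s_0 ~ I, a_t ~ pi(s_t), s_{t+1} ~ T(s_t,a_t). *)
Definition traj_law (E : env R m k) (pi : policy R m k)
  (P : probability XiM R) : Prop :=
  forall n s a, P (cyl n s a) = (cyl_prob E pi n s a)%:E.

Definition total_preorder (pref : policy R m k -> policy R m k -> Prop) : Prop :=
  (forall p, pref p p) /\
  (forall p q r, pref p q -> pref q r -> pref p r) /\
  (forall p q, pref p q \/ pref q p).

Definition rrl_return (Rw : St m -> St k -> St m -> R) (alpha : R)
  (F : dist R (St k) -> R) (gamma : R) (pi : policy R m k) (xi : XiM) : R :=
  limn (fun n => \sum_(t < n)
     gamma ^+ t * (Rw (st xi t) (act xi t) (st xi t.+1) - alpha * F (pi (st xi t)))).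

Definition J_RRL Rw alpha F gamma (pi : policy R m k) (P : probability XiM R)
  : \bar R := (\int[P]_xi (rrl_return Rw alpha F gamma pi xi)%:E)%E.

Definition OrdRRL (E : env R m k) (pref : policy R m k -> policy R m k -> Prop)
  : Prop :=
  exists (Rw : St m -> St k -> St m -> R) (alpha : R)
         (F : dist R (St k) -> R) (gamma : R),
    0 <= gamma < 1 /\
    forall Pf : policy R m k -> probability XiM R,
      (forall pi, traj_law E pi (Pf pi)) ->
      forall p1 p2, pref p1 p2 <->
        (J_RRL Rw alpha F gamma p2 (Pf p2) <= J_RRL Rw alpha F gamma p1 (Pf p1))%E.

Definition OrdFTR (E : env R m k) (pref : policy R m k -> policy R m k -> Prop)
  : Prop :=
  exists f : XiM -> R,
    measurable_fun setT f /\
    forall Pf : policy R m k -> probability XiM R,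
      (forall pi, traj_law E pi (Pf pi)) ->
      (forall pi, (Pf pi).-integrable setT (EFin \o f)) /\
      (forall p1 p2, pref p1 p2 <->
        (\int[Pf p2]_xi (f xi)%:E <= \int[Pf p1]_xi (f xi)%:E)%E).

End Trajectories.

Notation XiM m k := (g_sigma_algebraType (@xi_open m k)).

(* Main.v *)
Require Import Defs.
From mathcomp Require Import all_boot all_order all_algebra.
From mathcomp Require Import all_classical all_reals all_analysis.
From HB Require Import structures.
From mathcomp Require Import ring lra measurable_realfun.
Import Order.TTheory GRing.Theory Num.Theory.
Set Implicit Arguments.
Unset Strict Implicit.

Local Open Scope classical_set_scope.
Local Open Scope ring_scope.

Section Dec.
Variable R : realType.

Definition nxt (c v : R) := if v < c then v / c else (v - c) / (1 - c).

Fixpoint bit (c : nat -> R) (v : R) (t : nat) : bool :=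
  match t with
  | 0 => v < c 0%N
  | t'.+1 => bit (fun i => c i.+1) (nxt (c 0%N) v) t'
  end.

Definition W (c : nat -> R) (n : nat) (b : nat -> bool) : R :=
  \prod_(t < n) (if b t then c t else 1 - c t).

Lemma WS c n b : W c n.+1 b =
  (if b 0%N then c 0%N else 1 - c 0%N) * W (fun i => c i.+1) n (fun i => b i.+1).
Proof. by rewrite /W big_ord_recl. Qed.

Lemma W_ge0 c n b : (forall t, 0 <= c t <= 1) -> 0 <= W c n b.
Proof.
move=> hc; rewrite /W; apply: prodr_ge0 => i _.
case: (b i); have := hc i; lra.
Qed.

Lemma bit_itv n : forall (c : nat -> R) (b : nat -> bool),
  (forall t, 0 <= c t <= 1) ->
  exists L, 0 <= L /\ L + W c n b <= 1 /\
    forall v, ((0 <= v < 1) /\ (forall t, (t < n)%N -> bit c v t = b t))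
      <-> (L <= v < L + W c n b).
Proof.
elim: n => [|n IH] c b hc.
  exists 0; rewrite /W big_ord0; split; first lra; split; first lra.
  move=> v; split; first by move=> [h _]; lra.
  by move=> h; split; [lra | by []].
have hc' : forall t, 0 <= (fun i => c i.+1) t <= 1 by move=> t; exact: hc.
have [L [hL0 [hLW hiff]]] := IH (fun i => c i.+1) (fun i => b i.+1) hc'.
set W' := W (fun i => c i.+1) n (fun i => b i.+1) in hLW hiff *.
have hW0 : 0 <= W' by exact: W_ge0.
have hc0 := hc 0%N.
have /andP [hc0a hc0b] := hc0.
rewrite WS -/W'.
case hb: (b 0%N) => /=.
- have [c0z|c0p] : c 0%N = 0 \/ 0 < c 0%N.
    by case/andP: hc0; rewrite le_eqVlt => /orP [/eqP ->|->]; [left|right].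
  + exists 0; rewrite c0z mul0r; split; first lra; split; first lra.
    move=> v; split; last lra.
    move=> [h0 H]; have := H 0%N isT; rewrite /= hb c0z => hv; lra.
  + exists (c 0%N * L); split; first nra.
    split; first nra.
    move=> v; split.
    * move=> [h0 H]; have := H 0%N isT; rewrite /= hb => hv.
      set w := v / c 0%N.
      have hvw : v = c 0%N * w by rewrite /w mulrC divfK // gt_eqF.
      have hw : 0 <= w < 1 by rewrite hvw in hv h0; nra.
      have Hw : forall t, (t < n)%N -> bit (fun i => c i.+1) w t = b t.+1.
        by move=> t tn; have := H t.+1 tn; rewrite /= /nxt hv.
      have := (hiff w).1 (conj hw Hw); nra.
    * move=> hv; set w := v / c 0%N.
      have hvw : v = c 0%N * w by rewrite /w mulrC divfK // gt_eqF.
      have hw : L <= w < L + W' by rewrite hvw in hv; nra.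
      have [hw01 Hw] := (hiff w).2 hw.
      have hvc : v < c 0%N by nra.
      split; first nra.
      case=> [|t] /=; first by rewrite hb hvc.
      by move=> tn; rewrite /nxt hvc; exact: Hw.
- have [c0z|c0p] : c 0%N = 1 \/ c 0%N < 1.
    by case/andP: hc0 => _; rewrite le_eqVlt => /orP [/eqP ->|->]; [left|right].
  + exists 0; rewrite c0z subrr mul0r; split; first lra; split; first lra.
    move=> v; split; last lra.
    move=> [h0 H]; have := H 0%N isT; rewrite /= hb c0z => /negbT; rewrite -leNgt => hv; lra.
  + have c1p : 0 < 1 - c 0%N by lra.
    exists (c 0%N + (1 - c 0%N) * L); split; first nra.
    split; first nra.
    move=> v; split.
    * move=> [h0 H]; have := H 0%N isT; rewrite /= hb => /negbT; rewrite -leNgt => hv.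
      set w := (v - c 0%N) / (1 - c 0%N).
      have hvw : v = c 0%N + (1 - c 0%N) * w.
        by rewrite /w mulrC divfK ?gt_eqF //; ring.
      have hw : 0 <= w < 1 by rewrite hvw in hv h0; nra.
      have Hw : forall t, (t < n)%N -> bit (fun i => c i.+1) w t = b t.+1.
        by move=> t tn; have := H t.+1 tn; rewrite /= /nxt ltNge hv.
      have := (hiff w).1 (conj hw Hw); nra.
    * move=> hv; set w := (v - c 0%N) / (1 - c 0%N).
      have hvw : v = c 0%N + (1 - c 0%N) * w.
        by rewrite /w mulrC divfK ?gt_eqF //; ring.
      have hw : L <= w < L + W' by rewrite hvw in hv; nra.
      have [hw01 Hw] := (hiff w).2 hw.
      have hvc : c 0%N <= v by nra.
      split; first nra.
      case=> [|t] /=; first by rewrite hb ltNge hvc.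
      by move=> tn; rewrite /nxt ltNge hvc; exact: Hw.
Qed.

End Dec.

Local Open Scope classical_set_scope.
Local Open Scope ring_scope.

Lemma bigU_seq (T : Type) (I : eqType) (F : I -> set T) (s : seq I) x :
  (\big[setU/set0]_(i <- s) F i) x <-> exists i, i \in s /\ F i x.
Proof.
elim: s => [|a s IH]; rewrite ?big_nil ?big_cons.
  by split => // -[i []].
split.
  case=> [h|/IH [i [hi hF]]]; first by exists a; rewrite mem_head.
  by exists i; rewrite in_cons hi orbT.
case=> i []; rewrite in_cons => /orP [/eqP ->|hi] hF; first by left.
by right; apply/IH; exists i.
Qed.

Lemma bigU_fin (T : Type) (I : finType) (F : I -> set T) x :
  (\big[setU/set0]_(i : I) F i) x <-> exists i, F i x.
Proof.
rewrite bigU_seq; split; first by case=> i [_ h]; exists i.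
by case=> i h; exists i; rewrite mem_index_enum.
Qed.

Lemma I2cases (x : 'I_2) : x = ord0 \/ x = ord_max.
Proof.
case: x => [[|[|n]] hn]; [left|right|by []]; exact: val_inj.
Qed.

Lemma ord0_neq_max : (ord0 : 'I_2) <> ord_max.
Proof. by move/(congr1 val). Qed.

Section Env.
Variable R : realType.

Lemma sum2 (F : 'I_2 -> R) : \sum_(x : 'I_2) F x = F ord0 + F ord_max.
Proof.
rewrite big_ord_recl big_ord1.
by congr (_ + F _); apply: val_inj.
Qed.

Definition ddist {p : R} (hp : 0 <= p <= 1) : dist R 'I_2.
refine (@Dist R 'I_2 (fun x => if x == ord0 then p else 1 - p) _ _).
- move=> x; case: ifP => _; case/andP: hp => ? ?; lra.
- rewrite sum2 /=; lra.
Defined.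

Lemma dist_max (d : dist R 'I_2) : d ord_max = 1 - d ord0.
Proof. have := dprob_sum1 d; rewrite sum2 => h; lra. Qed.

Lemma dist_01 (d : dist R 'I_2) x : 0 <= d x <= 1.
Proof.
have := dprob_sum1 d; rewrite sum2 => h.
have := dprob_ge0 d ord0; have := dprob_ge0 d ord_max.
case: (I2cases x) => ->; lra.
Qed.

Lemma h1 : 0 <= (1 : R) <= 1. Proof. lra. Qed.
Lemma h0 : 0 <= (0 : R) <= 1. Proof. lra. Qed.

Definition E0 : env R 1 1 := Env (fun _ _ => ddist h0) (ddist h1).


Definition cpol (pi : policy R 1 1) (t : nat) : R :=
  pi (if t is 0 then ord0 else ord_max) ord0.
Lemma cpol01 pi t : 0 <= cpol pi t <= 1.
Proof. exact: dist_01. Qed.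

Definition clamp (u : R) := if (0 <= u) && (u < 1) then u else 0.
Definition beta pi u := bit (cpol pi) (clamp u).
Definition Dbits (b : nat -> bool) : XiM 1 1 :=
  (ord0, fun t => (if b t then ord0 else ord_max, ord_max)).
Definition Dtraj pi (u : R) : XiM 1 1 := Dbits (beta pi u).

Definition I01 : set R := [set` `[(0:R), 1[].
Lemma mI01 : measurable I01.
Proof. exact: measurable_itv. Qed.

Definition Apre pi n b := [set u : R | forall t, (t < n)%N -> beta pi u t = b t].

Lemma I01E u : I01 u = (0 <= u < 1).
Proof. by rewrite /I01 /= in_itv. Qed.

Lemma Apre_I pi n b : exists L,
  Apre pi n b `&` I01 = [set` `[L, L + W (cpol pi) n b[].
Proof.
have [L [hL0 [hLW hiff]]] := bit_itv n b (cpol01 pi).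
exists L; apply/seteqP; split => u /=; rewrite I01E in_itv /=.
  move=> [H /andP [u0 u1]].
  have hc : clamp u = u by rewrite /clamp u0 u1.
  apply/(hiff u).1; split; first by rewrite u0 u1.
  by move=> t tn; have := H t tn; rewrite /beta hc.
move=> h; have [/andP [u0 u1] H] := (hiff u).2 h.
have hc : clamp u = u by rewrite /clamp u0 u1.
split; last by rewrite u0 u1.
by move=> t tn; rewrite /beta hc; exact: H.
Qed.

Lemma lebApre pi n b :
  lebesgue_measure (Apre pi n b `&` I01) = (W (cpol pi) n b)%:E.
Proof.
have [L ->] := Apre_I pi n b.
rewrite lebesgue_measure_itv /= lte_fin.
have hW := W_ge0 n b (cpol01 pi).
case: ifPn => h.
  by congr (_%:E); ring.
have -> : W (cpol pi) n b = 0 by move: h; rewrite -leNgt => h'; lra.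
by [].
Qed.

Lemma meas_cst (P : Prop) : measurable [set _ : R | P].
Proof.
case: (pselect P) => h.
  by rewrite (_ : [set _ | P] = setT) //; apply/seteqP; split.
by rewrite (_ : [set _ | P] = set0) //; apply/seteqP; split.
Qed.

Lemma mesApre pi n b : measurable (Apre pi n b).
Proof.
rewrite -[Apre pi n b]setIT -(setUCr I01) setIUr.
apply: measurableU.
  by have [L ->] := Apre_I pi n b; exact: measurable_itv.
rewrite (_ : _ `&` _ = ~` I01 `&` [set _ | forall t, (t < n)%N -> bit (cpol pi) 0 t = b t]).
  apply: measurableI; [exact: measurableC mI01 | exact: meas_cst].
apply/seteqP; split => u /=.
  move=> [H hu]; split => // t tn; have := H t tn.
  by rewrite /beta /clamp; move: hu; rewrite I01E => /negP /negbTE ->.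
move=> [hu H]; split => // t tn; rewrite /beta /clamp.
by move: hu; rewrite I01E => /negP /negbTE ->; exact: H.
Qed.

Definition bf n (b : {ffun 'I_n -> bool}) (t : nat) : bool :=
  if insub t is Some i then b i else false.
Arguments bf {n}.
Lemma bfE n (b : {ffun 'I_n -> bool}) t (tn : (t < n)%N) : bf b t = b (Ordinal tn).
Proof. by rewrite /bf insubT. Qed.

Lemma agree_Dbits n (b b' : nat -> bool) y :
  (forall t, (t < n)%N -> b t = b' t) -> agree n (Dbits b) y -> agree n (Dbits b') y.
Proof.
move=> H [h1 h2]; split => // t tn; rewrite -h2 //= H //.
Qed.

Lemma mDtraj pi : measurable_fun setT (Dtraj pi).
Proof.
apply: (@measurability _ _ _ _ setT (Dtraj pi) (@xi_open 1 1)) => //.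
move=> _ [B oB <-]; rewrite setTI.
have -> : Dtraj pi @^-1` B = \bigcup_n \big[setU/set0]_(b : {ffun 'I_n -> bool})
   (Apre pi n (bf b) `&` [set _ | [set y | agree n (Dbits (bf b)) y] `<=` B]).
  apply/seteqP; split => u /=.
    move=> hB; have [n hn] := oB _ hB.
    exists n => //; apply/bigU_fin; exists [ffun i : 'I_n => beta pi u i]; split.
      by move=> t tn; rewrite (@bfE _ _ _ tn) ffunE.
    move=> y hy; apply: hn; apply: agree_Dbits hy => t tn.
    by rewrite (@bfE _ _ _ tn) ffunE.
  move=> [n _ /bigU_fin [b [hA hQ]]]; apply: hQ.
  by split => // t tn /=; rewrite hA.
apply: bigcupT_measurable => n; apply: bigsetU_measurable => b _.
by apply: measurableI; [exact: mesApre | exact: meas_cst].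
Qed.

End Env.

Section Ptraj.
Local Open Scope ereal_scope.
Variable R : realType.
Variable pi : policy R 1 1.

Notation mu01 := (mrestr (@lebesgue_measure R) (@mI01 R)).
Definition Ptraj : set (XiM 1 1) -> \bar R := pushforward mu01 (Dtraj pi).

Let mf := mDtraj pi.

Let Pt0 : Ptraj set0 = 0.
Proof. by rewrite /Ptraj /pushforward preimage_set0 measure0. Qed.

Let Pt_ge0 A : 0 <= Ptraj A.
Proof.
rewrite /Ptraj /pushforward /mrestr /=.
exact: measure_ge0.
Qed.

Let Pt_sigma : semi_sigma_additive Ptraj.
Proof.
move=> F mF tF mUF; rewrite /Ptraj /pushforward preimage_bigcup.
apply: measure_semi_sigma_additive.
- by move=> n; rewrite -[X in measurable X]setTI; exact: mf.
- apply/trivIsetP => /= i j _ _ ij; rewrite -preimage_setI.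
  by move/trivIsetP : tF => /(_ _ _ _ _ ij) ->//; rewrite preimage_set0.
- by rewrite -preimage_bigcup -[X in measurable X]setTI; exact: mf.
Qed.

HB.instance Definition _ := isMeasure.Build _ _ _ Ptraj Pt0 Pt_ge0 Pt_sigma.

Let PtT : Ptraj setT = 1.
Proof.
rewrite /Ptraj /pushforward /mrestr preimage_setT setTI.
rewrite /I01 lebesgue_measure_itv /= lte_fin ltr01.
by rewrite oppr0 adde0.
Qed.

HB.instance Definition _ := Measure_isProbability.Build _ _ _ Ptraj PtT.

End Ptraj.

Section Law.
Variable R : realType.

Lemma distE (d : dist R 'I_2) x : d x = if x == ord0 then d ord0 else 1 - d ord0.
Proof.
case: (I2cases x) => ->; first by rewrite eqxx.
have -> : (ord_max == ord0 :> 'I_2) = false by apply/eqP => /esym; exact: ord0_neq_max.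
exact: dist_max.
Qed.

Lemma maxNord0 : (ord_max == ord0 :> 'I_2) = false.
Proof. by apply/eqP => /esym; exact: ord0_neq_max. Qed.

Lemma traj_Ptraj (pi : policy R 1 1) : traj_law (E0 R) pi (Ptraj pi).
Proof.
move=> n s a.
transitivity (lebesgue_measure (Dtraj pi @^-1` cyl n s a `&` (@I01 R))); first by [].
have [[hs0 hs]|hS] := pselect (s 0%N = ord0 /\ forall t, (0 < t <= n)%N -> s t = ord_max).
- have -> : Dtraj pi @^-1` cyl n s a = Apre pi n (fun t => a t == ord0).
    apply/seteqP; split => u /=.
      move=> H t tn; have [_ /(_ tn)] := H t (ltnW tn).
      rewrite /act /Dtraj /Dbits /=; case: (beta pi u t) => <-.
        by rewrite eqxx.
      by rewrite maxNord0.
    move=> H t tn; split.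
      case: t tn => [|t] tn /=; first by rewrite hs0.
      by rewrite hs.
    move=> tn'; rewrite /act /Dtraj /Dbits /= H //.
    by case: (I2cases (a t)) => ->; rewrite ?eqxx ?maxNord0.
  rewrite lebApre /cyl_prob /=; congr (_%:E).
  rewrite hs0 eqxx mul1r /W; apply: eq_bigr => i _.
  rewrite (hs i.+1); last exact: ltn_ord.
  rewrite maxNord0 subr0 mulr1 (distE (pi (s i))) /cpol.
  have -> : s i = (match nat_of_ord i with 0 => ord0 | _.+1 => ord_max end).
    case: i => [[|j] hj] /=; first exact: hs0.
    by apply: hs; rewrite /= ltnW.
  by [].
- have -> : Dtraj pi @^-1` cyl n s a = set0.
    apply/seteqP; split => u //= H; apply: hS; split.
      by have [<-] := H 0%N isT.
    case=> [//|t] /andP [_ tn].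
    by have [<-] := H t.+1 tn.
  rewrite set0I measure0 /cyl_prob /=.
  have [h0|h0] := pselect (s 0%N = ord0); last first.
    by rewrite ifF ?subrr ?mul0r //; apply/eqP.
  have [t [ht hst]] : exists t, (0 < t <= n)%N /\ s t <> ord_max.
    apply: contrapT => hne; apply: hS; split => // t ht.
    by apply: contrapT => hst; apply: hne; exists t.
  case: t ht hst => [//|t] /andP [_ tn] hst.
  rewrite (bigD1 (Ordinal tn)) //= .
  have -> : s t.+1 == ord0 by case: (I2cases (s t.+1)) hst => -> // _; rewrite eqxx.
  by rewrite mulr0 mul0r mulr0.
Qed.

End Law.

Local Open Scope classical_set_scope.
Local Open Scope ring_scope.

Section RRL.
Variable R : realType.

Definition Fr (d : dist R 'I_2) : R := d ord0 * d ord_max.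

Lemma meas_cstX d (T : measurableType d) (P : Prop) : measurable [set _ : T | P].
Proof.
case: (pselect P) => h.
  by rewrite (_ : [set _ | P] = setT) //; apply/seteqP; split.
by rewrite (_ : [set _ | P] = set0) //; apply/seteqP; split.
Qed.

Lemma meas_fst (s0 : 'I_2) : measurable [set xi : XiM 1 1 | xi.1 = s0].
Proof.
apply: sub_sigma_algebra => x hx; exists 0%N => y [h _].
by rewrite /= -h.
Qed.

Lemma mfun_fst (phi : 'I_2 -> \bar R) :
  measurable_fun setT (fun xi : XiM 1 1 => phi xi.1).
Proof.
move=> _ B mB; rewrite setTI.
rewrite (_ : _ @^-1` B = ([set xi : XiM 1 1 | xi.1 = ord0] `&` [set _ | B (phi ord0)])
   `|` ([set xi : XiM 1 1 | xi.1 = ord_max] `&` [set _ | B (phi ord_max)])).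
  by apply: measurableU; apply: measurableI; (exact: meas_fst || exact: meas_cstX).
apply/seteqP; split => xi /=.
  by case: (I2cases xi.1) => ->; [left|right].
by case=> -[-> h].
Qed.

Lemma rrl_val (pi : policy R 1 1) (xi : XiM 1 1) :
  rrl_return (fun _ _ _ => 0) 1 Fr 0 pi xi = - Fr (pi xi.1).
Proof.
rewrite /rrl_return; apply: norm_lim_near_cst.
exists 1%N => // -[//|n] _ /=.
rewrite big_ord_recl /= expr0 mul1r sub0r mul1r big1 ?addr0 //.
by move=> i _; rewrite exprS mul0r mul0r.
Qed.

Lemma J_val (pi : policy R 1 1) (P : probability (XiM 1 1) R) :
  traj_law (E0 R) pi P ->
  J_RRL (fun _ _ _ => 0) 1 Fr 0 pi P = (- Fr (pi ord0))%:E.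
Proof.
move=> hP; rewrite /J_RRL.
under eq_integral => xi _ do rewrite rrl_val.
have hA : P [set xi : XiM 1 1 | xi.1 = ord_max] = 0%E.
  have -> : [set xi : XiM 1 1 | xi.1 = ord_max] = cyl 0 (fun _ => ord_max) (fun _ => ord0).
    apply/seteqP; split => xi /=.
      by move=> h t; rewrite leqn0 => /eqP ->.
    by move=> /(_ 0%N isT) [].
  rewrite hP /cyl_prob /= big_ord0 mulr1.
  by rewrite subrr.
rewrite (@ae_eq_integral _ _ _ P setT (cst (- Fr (pi ord0))%:E)) //.
- rewrite integral_cst //; set z := (X in (_ * X)%E); have -> : z = 1%E by exact: probability_setT.
  by rewrite mule1.
- exact: (mfun_fst (fun s => (- Fr (pi s))%:E)).
- exists [set xi : XiM 1 1 | xi.1 = ord_max]; split => //; first exact: meas_fst.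
  move=> xi /= h; case: (I2cases xi.1) => // h0; exfalso; apply: h => _.
  by rewrite h0.
Qed.

End RRL.

Local Open Scope classical_set_scope.
Local Open Scope ring_scope.

Section FTR.
Variable R : realType.

Definition pol (d : dist R 'I_2) : policy R 1 1 :=
  fun s => if s == ord0 then d else ddist (@h1 R).
Definition Xb (b : bool) : XiM 1 1 := Dbits (fun t => if t is 0 then b else true).

Lemma clamp01 (u : R) : 0 <= clamp u < 1.
Proof. rewrite /clamp; case: ifP => // _; lra. Qed.

Lemma bit1 (c : nat -> R) v t : (forall i, c i = 1) -> 0 <= v < 1 -> bit c v t.
Proof.
elim: t c v => [|t IH] c v hc /andP [v0 v1] /=; first by rewrite hc.
apply: IH => //; rewrite /nxt hc v1 divr1; apply/andP; split => //.
Qed.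

Lemma nxt01 (c v : R) : 0 <= c <= 1 -> 0 <= v < 1 -> 0 <= nxt c v < 1.
Proof.
move=> /andP [c0 c1] /andP [v0 v1]; rewrite /nxt; case: ifPn => hvc.
  have cp : 0 < c by lra.
  set w := v / c; have hvw : v = c * w by rewrite /w mulrC divfK // gt_eqF.
  rewrite hvw in v0 hvc; apply/andP; split; nra.
rewrite -leNgt in hvc.
have cp : 0 < 1 - c by lra.
set w := (v - c) / (1 - c).
have hvw : v = c + (1 - c) * w by rewrite /w mulrC divfK ?gt_eqF //; ring.
rewrite hvw in v1 hvc; apply/andP; split; nra.
Qed.

Lemma beta_pol d u t : beta (pol d) u t = if t is 0 then beta (pol d) u 0 else true.
Proof.
case: t => [//|t]; rewrite /beta /=.
apply: bit1; last first.
  apply: nxt01; [exact: cpol01 | exact: clamp01].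
by move=> i; rewrite /cpol /pol maxNord0. 
Qed.

Lemma Dtraj_pol d u : Dtraj (pol d) u = Xb (beta (pol d) u 0).
Proof.
rewrite /Dtraj /Xb; congr Dbits; apply: funext => t.
by rewrite beta_pol.
Qed.

Lemma Wpol d (b : bool) :
  W (cpol (pol d)) 1 (fun _ => b) = if b then d ord0 else 1 - d ord0.
Proof. by rewrite /W big_ord1 /cpol /pol eqxx. Qed.

Local Open Scope ereal_scope.
Notation mu01 := (mrestr (@lebesgue_measure R) (@mI01 R)).

Lemma mDtraj' pi : measurable_fun (T := measurableTypeR R) setT (Dtraj pi).
Proof. exact: mDtraj. Qed.

Lemma J_pol d (f : XiM 1 1 -> R) (mf : measurable_fun setT f)
  (intf : (Ptraj (pol d)).-integrable setT (EFin \o f)) :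
  \int[Ptraj (pol d)]_x (f x)%:E =
    (f (Xb true) * d ord0 + f (Xb false) * (1 - d ord0))%:E.
Proof.
set g := (EFin \o f).
have mg : measurable_fun setT g by exact/measurable_EFinP.
have mgD : measurable_fun setT (g \o Dtraj (pol d)) := measurableT_comp mg (mDtraj' _).
have intD : mu01.-integrable (Dtraj (pol d) @^-1` setT) (g \o Dtraj (pol d)).
  apply/integrableP; split; first by rewrite preimage_setT.
  have := ge0_integral_pushforward (mDtraj' (pol d)) mu01 (D := setT)
    (f := abse \o g) measurableT (measurableT_comp (@abse_measurable R setT) mg)
    (fun y _ => abse_ge0 _).
  move=> <-.
  by case/integrableP: intf => _ h; exact: h.
have E1 : \int[Ptraj (pol d)]_x g x =
    \int[mu01]_(x in Dtraj (pol d) @^-1` setT) (g \o Dtraj (pol d)) x.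
  exact: (integral_pushforward (mDtraj' (pol d)) mg intD measurableT).
rewrite E1 preimage_setT.
have hU : [set: R] = Apre (pol d) 1 (fun _ => true) `|` Apre (pol d) 1 (fun _ => false).
  apply/seteqP; split => u // _ /=.
  by case hb: (beta (pol d) u 0); [left|right] => -[|//] _.
rewrite hU integral_setU; first last.
- apply/disj_setPS => u [/(_ 0%N isT) h1 /(_ 0%N isT) h2].
  by rewrite h1 in h2.
- by rewrite -hU.
- exact: mesApre.
- exact: mesApre.
rewrite (eq_integral (cst (f (Xb true))%:E)); last first.
  by move=> u; rewrite inE => /(_ 0%N isT) h; rewrite /= Dtraj_pol h.
rewrite [X in _ + X](eq_integral (cst (f (Xb false))%:E)); last first.
  by move=> u; rewrite inE => /(_ 0%N isT) h; rewrite /= Dtraj_pol h.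
rewrite !integral_cst; [|exact: mesApre|exact: mesApre].
have hm b : mu01 (Apre (pol d) 1 (fun _ => b)) = (if b then d ord0 else 1 - d ord0)%:E.
  by rewrite /mrestr lebApre Wpol.
transitivity ((f (Xb true))%:E * (d ord0)%:E + (f (Xb false))%:E * (1 - d ord0)%:E).
  by congr (_ * _ + _ * _); [exact: (hm true) | exact: (hm false)].
by rewrite -!EFinM -EFinD.
Qed.

End FTR.

Local Open Scope classical_set_scope.
Local Open Scope ring_scope.

Lemma hhalf (R : realType) : 0 <= (1/2 : R) <= 1.
Proof. lra. Qed.

Lemma Fr_ddist (R : realType) (p : R) (hp : 0 <= p <= 1) : Fr (ddist hp) = p * (1 - p).
Proof. by []. Qed.

Lemma pol0 (R : realType) (d : dist R 'I_2) : pol d ord0 = d.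
Proof. by rewrite /pol eqxx. Qed.

Theorem mainTheorem15 (R : realType) :
  exists (m k : nat) (E : env R m k)
         (pref : policy R m k -> policy R m k -> Prop),
    total_preorder pref /\ OrdRRL E pref /\ ~ OrdFTR E pref.
Proof.
exists 1%N, 1%N, (E0 R), (fun p1 p2 => Fr (p1 ord0) <= Fr (p2 ord0)).
split.
  split; first by move=> p; exact: lexx.
  split; first by move=> p q r; exact: le_trans.
  by move=> p q; case/orP: (le_total (Fr (p ord0)) (Fr (q ord0))); [left|right].
split.
  exists (fun _ _ _ => 0), 1, (@Fr R), 0; split; first by rewrite lexx ltr01.
  move=> Pf hPf p1 p2; rewrite !J_val // lee_fin lerN2.
  by [].
move=> [f [mf H]].
have [Hint Hpref] := H (fun pi => Ptraj pi) (@traj_Ptraj R).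
have J1 := J_pol mf (Hint (pol (ddist (@h1 R)))).
have Jz := J_pol mf (Hint (pol (ddist (@h0 R)))).
have Jh := J_pol mf (Hint (pol (ddist (@hhalf R)))).
rewrite /= in J1 Jz Jh.
have A1 := (Hpref (pol (ddist (@h1 R))) (pol (ddist (@h0 R)))).1.
have A2 := (Hpref (pol (ddist (@h0 R))) (pol (ddist (@h1 R)))).1.
have A3 := (Hpref (pol (ddist (@hhalf R))) (pol (ddist (@h1 R)))).2.
rewrite !pol0 !Fr_ddist in A1 A2 A3.
rewrite J1 Jz lee_fin in A1 A2.
rewrite J1 Jh in A3.
have a1 := A1 ltac:(lra). have a2 := A2 ltac:(lra).
rewrite lee_fin in a2.
have := A3 ltac:(rewrite lee_fin; lra).
lra.
Qed.
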